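(* Let $\mathbb{G}$ be an undirected, unweighted random network model which is strongly idemetric (SI) and uniformly sparse (US). Then $\mathbb{G}$ is a weak ball expander (PUMP).
   Context: A random network model $\mathbb{G}$ assigns to every $n\in\mathbb{N}$ a probability distribution over graphs with $n$ nodes; $G_n$ denotes a graph sampled from it. $d(u,v)$ is the graph distance (length of a shortest path, $\infty$ if none). For a node $u$, $B_u(r)$ is the set of nodes at distance at most $r$ from $u$, and $\overline{B_u(r)}$ its complement. For node sets $X,Y$, $e(X,Y)$ is the number of edges with one endpoint in $X$ and one in $Y$. PUMP: for every $0<\epsilon<\tfrac12$ there exists $\alpha_\epsilon>0$ such that for all sufficiently large $n$, if $u$ is chosen uniformly at random from $G_n$ then with probability $>1-\epsilon$ both (i) there exists $r$ with $|B_u(r)|\ge \epsilon n$, and (ii) for all $r$ with $\epsilon n\le |B_u(r)|\le (1-\epsilon)n$, $e(B_u(r),\overline{B_u(r)})\ge \alpha_\epsilon |B_u(r)|$. US: for each $\epsilon>0$ there is a constant $C_\epsilon$ such that for all sufficiently large $n$, with probability at least $1-\epsilon$, for any set of $y\ge\epsilon n$ edges of $G_n$ every node cover (set of nodes meeting every edge of the set) has size at least $y/C_\epsilon$. SI: there exist a finite-valued function $f$ and, for each $\epsilon>0$, a bound $b_\epsilon$ independent of $n$, such that for all sufficiently large $n$, if $u,v$ are chosen uniformly at random from $G_n$ then $|f(n)-d(u,v)|<b_\epsilon$ with probability $>1-\epsilon$. *)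

(* Defs.v *)
From HB Require Import structures.
From mathcomp Require Import all_boot all_order all_algebra.
From mathcomp Require Import boolp reals.
Set Implicit Arguments. Unset Strict Implicit. Unset Printing Implicit Defensive.
Import Order.TTheory GRing.Theory Num.Theory.
Local Open Scope ring_scope.

Definition graph (n : nat) := {ffun 'I_n -> {set 'I_n}}.

Definition simple_graph n (g : graph n) : bool :=
  [forall u, u \notin g u] && [forall u, forall v, (v \in g u) == (u \in g v)].

Fixpoint ball n (g : graph n) (u : 'I_n) (r : nat) : {set 'I_n} :=
  match r with
  | 0 => [set u]
  | r'.+1 => ball g u r' :|: \bigcup_(w in ball g u r') g w
  end.

Definition dist_is n (g : graph n) (u v : 'I_n) (k : nat) : Prop :=
  v \in ball g u k /\ (forall j, (j < k)%N -> v \notin ball g u j).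

(* e(X, complement X): edges with one endpoint in X and the other in Y
   (counted as ordered pairs (x,y), x in X, y in Y; exact for disjoint X, Y). *)
Definition e_between n (g : graph n) (X Y : {set 'I_n}) : nat :=
  #|[set p : 'I_n * 'I_n | [&& p.1 \in X, p.2 \in Y & p.2 \in g p.1]]|.

Definition is_edge n (g : graph n) (e : {set 'I_n}) : bool :=
  [exists a, exists b, (e == [set a; b]) && (b \in g a) && (a != b)].

Definition node_cover n (S : {set {set 'I_n}}) (X : {set 'I_n}) : bool :=
  [forall e in S, ~~ [disjoint e & X]].

Record random_model (R : realType) := RandomModel {
  Pr : forall n, {ffun graph n -> R};
  Pr_ge0 : forall n g, 0 <= Pr n g;
  Pr_sum1 : forall n, \sum_(g : graph n) Pr n g = 1;
  Pr_simple : forall n (g : graph n), 0 < Pr n g -> simple_graph g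
}.

Definition prob_graph R (M : random_model R) n (E : graph n -> Prop) : R :=
  \sum_(g : graph n) Pr M n g * (`[< E g >])%:R.

Definition prob_node R (M : random_model R) n (E : graph n -> 'I_n -> Prop) : R :=
  \sum_(g : graph n) Pr M n g * (#|[set u | `[< E g u >]]|%:R / n%:R).

Definition prob_pair R (M : random_model R) n
    (E : graph n -> 'I_n -> 'I_n -> Prop) : R :=
  \sum_(g : graph n) Pr M n g *
    (#|[set p : 'I_n * 'I_n | `[< E g p.1 p.2 >]]|%:R / (n * n)%:R).

Definition SI R (M : random_model R) : Prop :=
  exists f : nat -> R, forall eps : R, 0 < eps ->
    exists b : R, exists N : nat, forall n, (N <= n)%N ->
      prob_pair M (n:=n) (fun g u v => exists k, dist_is g u v k /\ `|f n - k%:R| < b)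
        > 1 - eps.

Definition US R (M : random_model R) : Prop :=
  forall eps : R, 0 < eps ->
    exists C : R, 0 < C /\ exists N : nat, forall n, (N <= n)%N ->
      prob_graph M (n:=n) (fun g => forall S : {set {set 'I_n}},
          (forall e, e \in S -> is_edge g e) ->
          eps * n%:R <= #|S|%:R ->
          forall X : {set 'I_n}, node_cover S X -> #|S|%:R / C <= #|X|%:R)
        >= 1 - eps.

Definition PUMP R (M : random_model R) : Prop :=
  forall eps : R, 0 < eps -> eps < 2^-1 ->
    exists alpha : R, 0 < alpha /\ exists N : nat, forall n, (N <= n)%N ->
      prob_node M (n:=n) (fun g u =>
          (exists r, eps * n%:R <= #|ball g u r|%:R) /\
          (forall r, eps * n%:R <= #|ball g u r|%:R ->
                     #|ball g u r|%:R <= (1 - eps) * n%:R ->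
                     alpha * #|ball g u r|%:R <= (e_between g (ball g u r) (~: ball g u r))%:R))
        > 1 - eps.

(* Main.v *)
Require Import Defs.
From mathcomp Require Import all_boot all_order all_algebra.
From mathcomp Require Import boolp reals.
From mathcomp Require Import ring lra zify.
Set Implicit Arguments. Unset Strict Implicit. Unset Printing Implicit Defensive.
Import Order.TTheory GRing.Theory Num.Theory.
Local Open Scope ring_scope.

Section Balls.
Variables (n : nat) (g : graph n) (u : 'I_n).

Definition layer (j : nat) : {set 'I_n} := ball g u j.+1 :\: ball g u j.

Lemma ball_subS j : ball g u j \subset ball g u j.+1.
Proof. by rewrite /= subsetUl. Qed.

Lemma ball_mono j k : (j <= k)%N -> ball g u j \subset ball g u k.
Proof.
elim: k => [|k IH]; first by rewrite leqn0 => /eqP ->.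
rewrite leq_eqVlt => /orP[/eqP -> //|]; rewrite ltnS => /IH H.
exact: subset_trans H (ball_subS k).
Qed.

Lemma in_ballS j y : y \in ball g u j.+1 -> y \notin ball g u j ->
  exists2 w, w \in ball g u j & y \in g w.
Proof.
rewrite /= inE => /orP[-> //|/bigcupP[w Hw Hy]] _; by exists w.
Qed.

Lemma in_ballS' j w y : w \in ball g u j -> y \in g w -> y \in ball g u j.+1.
Proof. by move=> Hw Hy; rewrite /= inE; apply/orP; right; apply/bigcupP; exists w. Qed.

Lemma dist_le v k r : dist_is g u v k -> v \in ball g u r -> (k <= r)%N.
Proof. by move=> [_ H] Hv; rewrite leqNgt; apply/negP => /H; rewrite Hv. Qed.

Lemma dist_gt v k r : dist_is g u v k -> v \notin ball g u r -> (r < k)%N.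
Proof.
move=> [H _] Hv; rewrite ltnNge; apply/negP => Hkr.
by move: Hv; rewrite (subsetP (ball_mono Hkr)).
Qed.

Lemma dist_layer v k : dist_is g u v k -> (0 < k)%N -> v \in layer k.-1.
Proof.
move=> [H1 H2] Hk; rewrite /layer inE prednK // H1 andbT.
by apply: H2; rewrite prednK.
Qed.

Lemma layer_e r : (#|layer r| <= e_between g (ball g u r) (~: ball g u r))%N.
Proof.
rewrite /e_between.
set P := [set p : 'I_n * 'I_n | _].
apply: leq_trans (leq_imset_card snd P).
apply: subset_leq_card; apply/subsetP => y; rewrite inE => /andP[Hy1 Hy2].
have [w Hw Hyw] := in_ballS Hy2 Hy1.
by apply/imsetP; exists (w, y) => //; rewrite inE /= Hw inE Hy1 Hyw.
Qed.

Lemma layer_parent j y : y \in layer j.+1 -> exists2 w, w \in layer j & y \in g w.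
Proof.
rewrite inE => /andP[Hy1 Hy2].
have [w Hw Hyw] := in_ballS Hy2 Hy1.
exists w => //; rewrite inE Hw andbT; apply/negP => Hw'.
by move: Hy1; rewrite (in_ballS' Hw' Hyw).
Qed.

Lemma layer_disj j y : y \in layer j.+1 -> y \notin layer j.
Proof. by rewrite !inE => /andP[H _]; apply/negP => /andP[_ H']; rewrite H' in H. Qed.

End Balls.

Definition USev (R : realType) n (eps C : R) (g : graph n) : Prop :=
  forall S : {set {set 'I_n}},
          (forall e, e \in S -> is_edge g e) ->
          eps * n%:R <= #|S|%:R ->
          forall X : {set 'I_n}, node_cover S X -> #|S|%:R / C <= #|X|%:R.

Lemma us_step (R : realType) n (g : graph n) (eps C : R) u j :
  USev eps C g -> eps * n%:R <= #|layer g u j.+1|%:R ->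
  #|layer g u j.+1|%:R / C <= #|layer g u j|%:R.
Proof.
move=> HU Hge.
pose w (y : 'I_n) := odflt y [pick x in layer g u j | y \in g x].
have Hw : forall y, y \in layer g u j.+1 -> (w y \in layer g u j) && (y \in g (w y)).
  move=> y Hy; rewrite /w; case: pickP => [x /andP[-> ->] //|H0].
  have [x Hx Hyx] := layer_parent Hy.
  by move: (H0 x); rewrite Hx Hyx.
pose S := [set [set w y; y] | y in layer g u j.+1].
have cS : #|S| = #|layer g u j.+1|.
  apply: card_in_imset => y1 y2 H1 H2 E.
  have : y1 \in [set w y2; y2] by rewrite -E !inE eqxx orbT.
  rewrite !inE => /orP[/eqP E1|/eqP //].
  have /andP[H3 _] := Hw _ H2.
  by move: (layer_disj H1); rewrite E1 H3.
rewrite -cS; apply: HU; first 1 last.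
- by rewrite cS.
- apply/forallP => e; apply/implyP => /imsetP[y Hy ->].
  have /andP[H3 _] := Hw _ Hy.
  apply/negP => /disjointFr D; have := D (w y); rewrite H3 !inE eqxx; by move=> /(_ isT).
- move=> e /imsetP[y Hy ->]; have /andP[H3 H4] := Hw _ Hy.
  apply/existsP; exists (w y); apply/existsP; exists y; rewrite eqxx H4 /=.
  apply/negP => /eqP E; move: (layer_disj Hy); by rewrite -E H3.
Qed.

Section Prob.
Variables (R : realType) (M : random_model R) (n : nat).

Lemma prob_and (A B : graph n -> Prop) :
  prob_graph M A + prob_graph M B - 1 <= prob_graph M (fun g => A g /\ B g).
Proof.
rewrite /prob_graph; have S1 := Pr_sum1 M n.
rewrite -[X in _ - X <= _]S1 -big_split /= -sumrB.
apply: ler_sum => g _; have := Pr_ge0 M g.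
case: (asboolP (A g)) => a; case: (asboolP (B g)) => b;
  case: (asboolP (A g /\ B g)) => ab /=; try tauto; rewrite ?mulr1 ?mulr0; lra.
Qed.

Lemma prob_mono (A B : graph n -> Prop) : (forall g, A g -> B g) ->
  prob_graph M A <= prob_graph M B.
Proof.
move=> H; apply: ler_sum => g _; have := Pr_ge0 M g.
case: (asboolP (A g)) => a; case: (asboolP (B g)) => b /=; try lra.
by case: b; apply: H.
Qed.

Lemma prob_all (A : graph n -> Prop) : (forall g, A g) -> prob_graph M A = 1.
Proof.
move=> H; rewrite /prob_graph -[RHS](Pr_sum1 M n); apply: eq_bigr => g _.
by rewrite asboolT //= mulr1.
Qed.
End Prob.

Definition Chain (R : realType) n (m : nat) (eta alpha : R) (g : graph n) : Prop :=
  forall u j t, (t <= m)%N -> eta * n%:R <= #|layer g u (j + t)|%:R ->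
    alpha * n%:R <= #|layer g u j|%:R.

Lemma chain_lemma (R : realType) (M : random_model R) : US M ->
  forall m (eta : R), 0 < eta -> exists alpha : R, 0 < alpha /\ alpha <= eta /\
  exists N, forall n, (N <= n)%N ->
    1 - m%:R * eta <= prob_graph M (n:=n) (Chain m eta alpha).
Proof.
move=> HUS; elim=> [|m IH] eta Heta.
  exists eta; split => //; split => //; exists 0%N => n _.
  rewrite prob_all; first lra.
  by move=> g u j t; rewrite leqn0 => /eqP ->; rewrite addn0.
have [C [HC [N1 HN1]]] := HUS eta Heta.
pose eta1 := Num.min (eta / C) eta.
have He1 : 0 < eta1 by rewrite lt_min Heta divr_gt0.
have [al [Hal [Hale [N2 HN2]]]] := IH eta1 He1.
have Hale' : al <= eta by apply: (le_trans Hale); rewrite ge_min lexx orbT.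
exists al; split => //; split => //.
exists (maxn N1 N2) => n; rewrite geq_max => /andP[Hn1 Hn2].
have P1 := HN1 n Hn1; have P2 := HN2 n Hn2.
have Hmono : m%:R * eta1 <= m%:R * eta.
  by apply: ler_wpM2l; rewrite ?ler0n // ge_min lexx orbT.
have Himp : forall g : graph n, USev eta C g /\ Chain m eta1 al g -> Chain m.+1 eta al g.
  move=> g [HU HCh] u j [|t] Ht Hge.
    rewrite addn0 in Hge; apply: le_trans Hge.
    by apply: ler_wpM2r; [exact: ler0n | exact: Hale'].
  rewrite addnS in Hge.
  have H1 := us_step HU Hge.
  apply: (HCh u j t Ht).
  apply: le_trans H1.
  have Hn0 : 0 <= n%:R :> R by rewrite ler0n.
  rewrite /eta1.
  apply: le_trans (_ : eta / C * n%:R <= _).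
    by apply: ler_wpM2r => //; rewrite ge_min lexx.
  rewrite mulrAC; apply: ler_wpM2r => //; by rewrite invr_ge0 ltW.
apply: le_trans _ (@prob_mono R M n _ _ Himp).
apply: le_trans _ (@prob_and R M n _ _); rewrite -natr1; move: P1 P2; rewrite /USev; lra.
Qed.

Lemma card_bigcup_le (T I : finType) (F : I -> {set T}) :
  (#|\bigcup_i F i| <= \sum_i #|F i|)%N.
Proof.
elim/big_rec2: _ => [|i x y _ H]; first by rewrite cards0.
apply: leq_trans (leq_card_setU _ _) _; by rewrite leq_add2l.
Qed.

Section Core.
Variables (R : realType) (n : nat) (g : graph n) (u : 'I_n) (f b eps eta0 alpha : R) (L : nat).
Hypotheses (Hn : (0 < n)%N) (Heps : 0 < eps) (Heps2 : eps < 2^-1)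
  (HL : b + b <= L%:R) (Heta : L%:R * eta0 <= eps / 4) (Hal : 0 < alpha)
  (HCh : Chain L eta0 alpha g).

Let P v := exists k, dist_is g u v k /\ `|f - k%:R| < b.
Let W := [set v | `[< P v >]].
Hypothesis HW : #|~: W|%:R <= eps / 2 * n%:R.

Lemma close_k (kv kw : nat) : `|f - kv%:R| < b -> `|f - kw%:R| < b -> (kv < kw + L)%N.
Proof.
move=> H1 H2.
have : kv%:R < kw%:R + L%:R :> R.
  move: H1 H2; rewrite !ltr_norml => /andP[H1 H1'] /andP[H2 H2']; have HL' : b + b <= L%:R :> R := HL; (timeout 20 lra).
by rewrite -natrD ltr_nat.
Qed.

Lemma inW v : v \in W -> P v.
Proof. by rewrite inE => /asboolP. Qed.

Lemma core :
  (exists r, eps * n%:R <= #|ball g u r|%:R) /\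
  (forall r, eps * n%:R <= #|ball g u r|%:R ->
     #|ball g u r|%:R <= (1 - eps) * n%:R ->
     alpha * #|ball g u r|%:R <= (e_between g (ball g u r) (~: ball g u r))%:R).
Proof.
have Hn' : 0 < n%:R :> R by rewrite ltr0n.
have HW' : #|~: W|%:R <= eps / 2 * n%:R :> R := HW.
have Hen : eps * n%:R < 2^-1 * n%:R :> R by rewrite ltr_pM2r.
have Hen0 : 0 < eps * n%:R :> R by rewrite mulr_gt0.
have cW : #|W|%:R = n%:R - #|~: W|%:R :> R.
  have E := cardsC W; rewrite card_ord in E.
  by apply/eqP; rewrite eq_sym subr_eq -natrD E.
split.
  have : (0 < #|W|)%N.
    rewrite -(ltr_nat R) cW; (timeout 20 lra).
  rewrite card_gt0 => /set0Pn [w0 /inW [k0 [D0 H0]]].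
  exists (k0 + L)%N.
  have sub : W \subset ball g u (k0 + L).
    apply/subsetP => v /inW [kv [Dv Hv]].
    apply: (subsetP (ball_mono g u (ltnW (close_k Hv H0)))).
    by case: Dv.
  apply: le_trans (_ : #|W|%:R <= _); last by rewrite ler_nat subset_leq_card.
  rewrite cW; (timeout 20 lra).
move=> r H1 H2.
set B := ball g u r.
rewrite leNgt; apply/negP => He.
have cB : (#|B| <= n)%N by have := max_card B; rewrite card_ord.
have cB' : #|B|%:R <= n%:R :> R by rewrite ler_nat.
have /set0Pn [w] : W :&: B != set0.
  apply/negP => /eqP H0.
  have : B \subset ~: W.
    apply/subsetP => x Hx; rewrite inE; apply/negP => HxW.
    have : x \in W :&: B by rewrite inE HxW Hx.
    by rewrite H0 inE.
  move/subset_leq_card; rewrite -(ler_nat R) => Hc.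
  (timeout 20 lra).
rewrite inE => /andP[/inW [kw [Dw Hw]] HwB].
have Hkw := dist_le Dw HwB.
have sub : (~: B) :&: W \subset \bigcup_(t < L) layer g u (r + t).
  apply/subsetP => v; rewrite inE => /andP[]; rewrite inE => HvB /inW [kv [Dv Hv]].
  have Hr := dist_gt Dv HvB.
  have Hk := close_k Hv Hw.
  have Ht : (kv.-1 - r < L)%N by clear -Hr Hk Hkw; lia.
  apply/bigcupP; exists (Ordinal Ht) => //=.
  have -> : (r + (kv.-1 - r))%N = kv.-1 by clear -Hr; lia.
  have HH : (0 < kv)%N by clear -Hr; lia.
  exact: (dist_layer Dv HH).
have Hlt : forall t : 'I_L, #|layer g u (r + t)|%:R < eta0 * n%:R.
  move=> t; rewrite ltNge; apply/negP => Hge.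
  have := HCh (ltnW (ltn_ord t)) Hge.
  have := layer_e g u r; rewrite -(ler_nat R) -/B => Hle.
  have : alpha * #|B|%:R <= alpha * n%:R by rewrite ler_wpM2l // ltW.
  move: He Hle; (timeout 20 lra).
have Hsum : (\sum_(t < L) #|layer g u (r + t)|)%:R <= eps / 4 * n%:R :> R.
  rewrite natr_sum; apply: le_trans (ler_sum _ (fun i _ => ltW (Hlt i))) _.
  rewrite sumr_const card_ord -mulrnAl -[eta0 *+ L]mulr_natl.
  have Heta' : L%:R * eta0 <= eps / 4 :> R := Heta.
  by apply: ler_wpM2r => //; apply: ltW.
have Hc1 := subset_leq_card sub.
have Hc2 := card_bigcup_le (fun t : 'I_L => layer g u (r + t)).
have Hc3 := cardsID W (~: B).
have Hc4 : (#|~: B :\: W| <= #|~: W|)%N.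
  by apply: subset_leq_card; apply/subsetP => x; rewrite !inE => /andP[].
have Hc5 := cardsC B; rewrite card_ord in Hc5.
have : (#|~: B :&: W| <= \sum_(t < L) #|layer g u (r + t)|)%N by exact: leq_trans Hc1 Hc2.
rewrite -(ler_nat R) => Hx.
have : #|~: B|%:R <= #|~: B :&: W|%:R + #|~: W|%:R :> R.
  by rewrite -natrD ler_nat -{1}Hc3 leq_add2l.
have : #|B|%:R + #|~: B|%:R = n%:R :> R by rewrite -natrD Hc5.
(timeout 20 lra).
Qed.
End Core.

Lemma card_bad n (Q : 'I_n -> 'I_n -> bool) :
  #|~: [set p : 'I_n * 'I_n | Q p.1 p.2]| = (\sum_u #|~: [set v | Q u v]|)%N.
Proof.
rewrite -sum1_card big_mkcond /=.
rewrite (eq_bigr (fun u => \sum_v (if v \in ~: [set v | Q u v] then 1 else 0))%N); last first.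
  by move=> u _; rewrite -sum1_card big_mkcond.
rewrite (pair_bigA _ (fun u v => if v \in ~: [set v | Q u v] then 1 else 0)%N) /=.
by apply: eq_bigr => [[u v]] _; rewrite !inE.
Qed.

Section PerGraph.
Variables (R : realType) (n : nat) (g : graph n) (f b eps eta0 alpha : R) (L : nat).
Hypotheses (Hn : (0 < n)%N) (Heps : 0 < eps) (Heps2 : eps < 2^-1)
  (HL : b + b <= L%:R) (Heta : L%:R * eta0 <= eps / 4) (Hal : 0 < alpha).

Let Q (u v : 'I_n) := `[< exists k, dist_is g u v k /\ `|f - k%:R| < b >].

Lemma per_graph :
  (`[< Chain L eta0 alpha g >])%:R
    - (1 - #|[set p : 'I_n * 'I_n | Q p.1 p.2]|%:R / (n * n)%:R) * (2 / eps)
  <= #|[set u | `[< (exists r, eps * n%:R <= #|ball g u r|%:R) /\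
          (forall r, eps * n%:R <= #|ball g u r|%:R ->
                     #|ball g u r|%:R <= (1 - eps) * n%:R ->
                     alpha * #|ball g u r|%:R <= (e_between g (ball g u r) (~: ball g u r))%:R) >]]|%:R
     / n%:R.
Proof.
set GP := [set p : 'I_n * 'I_n | Q p.1 p.2].
set GS := [set u | `[< _ >]].
have HN : 0 < n%:R :> R by rewrite ltr0n.
have HNN : (n * n)%:R = n%:R * n%:R :> R by rewrite natrM.
have cG := cardsC GP; rewrite card_prod card_ord in cG.
have Hk : 0 < 2 / eps :> R by rewrite divr_gt0.
have HGS : 0 <= #|GS|%:R / n%:R :> R by rewrite divr_ge0 // ler0n.
have Hs1 : #|GP|%:R / (n * n)%:R <= 1 :> R.
  rewrite ler_pdivrMr ?ltr0n ?muln_gt0 ?Hn // mul1r ler_nat -cG; exact: leq_addr.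
case: (asboolP (Chain L eta0 alpha g)) => HC /=; last first.
  have : 0 <= (1 - #|GP|%:R / (n * n)%:R) * (2 / eps) by rewrite mulr_ge0 // ?subr_ge0 // ltW.
  lra.
pose Ug := [set u | #|~: [set v | Q u v]|%:R <= eps / 2 * n%:R :> R].
have sub : Ug \subset GS.
  apply/subsetP => u; rewrite !inE => HW; apply/asboolP.
  exact: (core Hn Heps Heps2 HL Heta Hal HC HW).
set c := eps / 2 * n%:R.
have Hc : 0 < c by rewrite mulr_gt0 // divr_gt0.
have Markov : #|~: Ug|%:R * c <= #|~: GP|%:R.
  rewrite card_bad natr_sum.
  apply: le_trans (_ : \sum_u (if u \in ~: Ug then c else 0) <= _).
    by rewrite -big_mkcond /= sumr_const -[c *+ _]mulr_natr mulrC.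
  apply: ler_sum => u _; case: ifP => [|_]; last exact: ler0n.
  rewrite !inE -ltNge => /ltW //.
have cU := cardsC Ug; rewrite card_ord in cU.
have HGU : #|Ug|%:R / n%:R <= #|GS|%:R / n%:R :> R.
  by apply: ler_wpM2r; [rewrite invr_ge0 ltW | rewrite ler_nat subset_leq_card].
apply: le_trans HGU.
have EU : #|Ug|%:R = n%:R - #|~: Ug|%:R :> R by apply/eqP; rewrite eq_sym subr_eq -natrD cU.
have EG : #|GP|%:R = n%:R * n%:R - #|~: GP|%:R :> R by apply/eqP; rewrite eq_sym subr_eq -natrD cG natrM.
rewrite EU EG HNN.
set x := #|~: Ug|%:R in Markov *.
set B := #|~: GP|%:R in Markov *.
set N := n%:R in HN c Hc Markov *.
have E1 : 1 - (1 - (N * N - B) / (N * N)) * (2 / eps) = 1 - (x * c + (B - x * c)) * (2 / (eps * N * N)).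
  by rewrite /c; field; apply/andP; split; rewrite gt_eqF.
have E2 : (N - x) / N = 1 - (x * c) * (2 / (eps * N * N)).
  by rewrite /c; field; apply/andP; split; rewrite gt_eqF.
rewrite E1 E2.
have : 0 <= (B - x * c) * (2 / (eps * N * N)).
  by rewrite mulr_ge0 ?subr_ge0 // divr_ge0 // ?mulr_ge0 // ltW.
rewrite mulrDl; lra.
Qed.
End PerGraph.

Lemma lemma3_aux (R : realType) (M : random_model R) :
  SI M -> US M -> PUMP M.
Proof.
move=> [f Hf] HUS eps He0 He2.
have Hee : 0 < eps * eps / 8 by rewrite divr_gt0 // mulr_gt0.
have [b [N1 HN1]] := Hf _ Hee.
pose L := (Num.bound `|b + b|).+1.
have HL : b + b <= L%:R.
  have := archi_boundP (normr_ge0 (b + b)).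
  have := ler_norm (b + b).
  have : (Num.bound `|b + b|)%:R <= L%:R :> R by rewrite ler_nat.
  lra.
have HL0 : 0 < L%:R :> R by rewrite ltr0n.
pose eta0 := eps / (4 * L%:R).
have Heta0 : 0 < eta0 by rewrite divr_gt0 // mulr_gt0.
have Heta : L%:R * eta0 = eps / 4.
  by rewrite /eta0; field; rewrite gt_eqF.
have [al [Hal [_ [N2 HN2]]]] := chain_lemma HUS L Heta0.
exists al; split => //.
exists (maxn 1 (maxn N1 N2)) => n; rewrite !geq_max => /andP[Hn /andP[Hn1 Hn2]].
have P1 := HN1 n Hn1; have P2 := HN2 n Hn2.
rewrite Heta in P2.
have Hk : 0 < 2 / eps :> R by rewrite divr_gt0.
have Heta' : L%:R * eta0 <= eps / 4 by rewrite Heta.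
have Hsum := ler_sum (index_enum _) (P := xpredT) (fun g _ => ler_wpM2l (Pr_ge0 M g)
   (per_graph g (f n) Hn He0 He2 HL Heta' Hal)).
rewrite /prob_node; apply: lt_le_trans Hsum.
under eq_bigr => g _ do rewrite mulrBr mulrBl mul1r mulrBr mulrA.
rewrite !sumrB.
under [X in _ - (_ - X)]eq_bigr => g _ do rewrite (mulrA (Pr M n g)).
rewrite -!mulr_suml Pr_sum1 mul1r.
rewrite /prob_pair /= in P1.
rewrite /prob_graph in P2.
set SP := \sum_(i : graph n) _ * (_ / _) in P1 *.
set SC := \sum_(i : graph n) _ in P2 *.
have : (2 / eps) * (1 - SP) < (2 / eps) * (eps * eps / 8) by rewrite ltr_pM2l //; lra.
have -> : (2 / eps) * (eps * eps / 8) = eps / 4 by field; rewrite gt_eqF.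
lra.
Qed.

Unset Implicit Arguments.

Theorem lemma3 (R : realType) (M : random_model R) :
  SI M -> US M -> PUMP M.
Proof. exact: (@lemma3_aux R M). Qed.
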